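(* Let $G$ be a finite group with a non-abelian Hall $\pi$-subgroup $H$. If every element of $H\setminus Z(H)$ has $G$-conjugacy class size a $\pi$-number, then $G$ is $\pi$-decomposable.
   Context: $\pi$ is a set of primes; a group is $\pi$-decomposable if $G=O_\pi(G)\times O_{\pi'}(G)$; class size of $x$ is $|G:C_G(x)|$. *)

(* Defs.v *)
From mathcomp Require Import all_boot all_fingroup all_solvable.
Set Implicit Arguments.
Unset Strict Implicit.
Unset Printing Implicit Defensive.
Import GroupScope.

Definition pi_decomposable (gT : finGroupType) (pi : nat_pred) (G : {set gT}) :=
  'O_pi(G) \x 'O_pi^'(G) = G.

(* Main.v *)
Require Import Defs.
From mathcomp Require Import all_boot all_fingroup all_solvable.
Set Implicit Arguments. Unset Strict Implicit. Unset Printing Implicit Defensive.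
Import GroupScope.

Lemma cent_mul_Hall (gT : finGroupType) (pi : nat_pred) (G H : {group gT}) x :
  pi.-Hall(G) H -> pi.-nat #|G : 'C_G[x]| -> 'C_G[x] * H = G.
Proof.
move=> hallH pix; have [sHG piH _] := and3P hallH.
apply/eqP; rewrite eqEcard mul_subG ?subsetIl //=.
set C := 'C_G[x].
have: #|G| * #|C :&: H| <= #|C| * #|H|.
  rewrite -(Lagrange (subsetIl G 'C[x])) -/C (card_Hall hallH).
  rewrite -(Lagrange (subsetIl G 'C[x])) -/C partnM ?cardG_gt0 //.
  rewrite (part_pnat_id pix) -mulnA leq_mul2l mulnC leq_mul2r.
  apply/orP; right; apply/orP; right.
  apply: dvdn_leq; first by rewrite part_gt0.
  rewrite -(part_pnat_id (pgroupS (subsetIr C H) piH)).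
  by apply: partn_dvd; rewrite ?cardG_gt0 // cardSg ?subsetIl.
by rewrite (mul_cardG C H) leq_pmul2r ?cardG_gt0.
Qed.

Lemma conj_cent1 (gT : finGroupType) (x c : gT) : c \in 'C[x] -> x ^ c = x.
Proof. by move/cent1P=> cxc; rewrite conjgE -cxc mulKg. Qed.

From mathcomp Require Import zify.

Lemma cover_conj (gT : finGroupType) (D H : {group gT}) : D \subset H ->
  (forall x, x \in H -> exists2 h, h \in H & x ^ h \in D) -> D :=: H.
Proof.
move=> sDH covH; apply: index1g => //.
have le1: #|H| <= #|class_support D H|.
  apply: subset_leq_card; apply/subsetP=> x Hx.
  have [h Hh xhD] := covH x Hx.
  by rewrite -(conjgK h x) memJ_class_support ?groupV.
rewrite (cardsD1 1 (class_support D H)) class_supportD1 in le1.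
have le2 := leq_card_cover (D^# :^: H).
have le3: \sum_(B in D^# :^: H) #|B| = (#|D^# :^: H| * #|D^#|)%N.
  rewrite -sum_nat_const; apply: eq_bigr => B /imsetP[y _ ->].
  by rewrite cardJg.
have le4: #|D^# :^: H| <= #|H : D|.
  rewrite card_conjugates normD1; apply: dvdn_leq; first exact: indexg_gt0.
  by apply: indexgS; rewrite subsetI sDH normG.
have le5: #|D^#| = (#|D| - 1)%N by rewrite (cardsD1 1 D) group1 add1n subn1.
have HD := Lagrange sDH.
have := indexg_gt0 H D; have := cardG_gt0 D.
move: le1 le2 le3 le4 le5 HD.
set a := #|cover _|; set s := \sum_(_ in _) _; set c := #|D^# :^: H|.
set i := #|H : D|; set d := #|D|; set e := #|D^#|; set h := #|H|.
case: (1 \in _) => /=; move=> l1 [l2 _] l3 l4 l5 HD d0 i0.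
  rewrite l3 in l2.
  have : (e * c <= e * i)%N by rewrite leq_mul2l l4 orbT.
  nia.
rewrite l3 in l2.
have : (e * c <= e * i)%N by rewrite leq_mul2l l4 orbT.
nia.
Qed.

Lemma classH (gT : finGroupType) (pi : nat_pred) (G H : {group gT}) x g :
  pi.-Hall(G) H ->
  (forall x, x \in H :\: 'Z(H) -> pi.-nat #|G : 'C_G[x]|) ->
  x \in H :\: 'Z(H) -> g \in G -> exists2 h, h \in H & x ^ g = x ^ h.
Proof.
move=> hallH hyp xH Gg; have E := cent_mul_Hall hallH (hyp x xH).
rewrite -E in Gg; case/mulsgP: Gg => c h Cc Hh ->.
exists h => //; rewrite conjgM (@conj_cent1 _ x c) //.
by case/setIP: Cc.
Qed.

Lemma noncentral (gT : finGroupType) (H : {group gT}) :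
  ~~ abelian H -> exists2 y, y \in H & y \notin 'Z(H).
Proof.
move=> nab; suff: ~~ [forall (y | y \in H), y \in 'Z(H)].
  by rewrite negb_forall_in => /exists_inP.
apply: contra nab => /forall_inP hz; apply/centsP=> a Ha b Hb.
by have /centerP[_ ca] := hz a Ha; apply: ca.
Qed.

Lemma conjH (gT : finGroupType) (pi : nat_pred) (G H : {group gT}) x g :
  pi.-Hall(G) H -> ~~ abelian H ->
  (forall x, x \in H :\: 'Z(H) -> pi.-nat #|G : 'C_G[x]|) ->
  x \in H -> g \in G -> x ^ g \in H.
Proof.
move=> hallH nab hyp Hx Gg.
have nc: forall y, y \in H :\: 'Z(H) -> y ^ g \in H.
  move=> y yH; have [h Hh ->] := classH hallH hyp yH Gg.
  by rewrite groupJ //; case/setDP: yH.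
case Zx: (x \in 'Z(H)); last by apply: nc; rewrite inE Zx Hx.
have [y Hy nZy] := noncentral nab.
have -> : x = y * (y^-1 * x) by rewrite mulKVg.
have yD: y \in H :\: 'Z(H) by rewrite inE Hy nZy.
have yxD: y^-1 * x \in H :\: 'Z(H).
  rewrite inE (groupM (groupVr Hy) Hx) andbT.
  apply: contra nZy => Zyx.
have -> : y = x * (y^-1 * x)^-1 by rewrite invMg invgK mulKVg.
  by rewrite groupM ?groupV ?Zx.
by rewrite conjMg groupM ?nc.
Qed.

Lemma nsH (gT : finGroupType) (pi : nat_pred) (G H : {group gT}) :
  pi.-Hall(G) H -> ~~ abelian H ->
  (forall x, x \in H :\: 'Z(H) -> pi.-nat #|G : 'C_G[x]|) -> H <| G.
Proof.
move=> hallH nab hyp; have sHG := pHall_sub hallH.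
rewrite /normal sHG; apply/subsetP=> g Gg; rewrite inE.
apply/subsetP=> y; rewrite mem_conjg => Hy.
by rewrite -(conjgKV g y) (conjH hallH nab hyp) ?groupV.
Qed.

Lemma cent1_conj (gT : finGroupType) (x c : gT) : x ^ c = x -> c \in 'C[x].
Proof. by move=> h; apply/cent1P; rewrite /commute -{1}h conjgE mulKVg. Qed.

Lemma glaub (gT : finGroupType) (pi : nat_pred) (G H : {group gT}) x g :
  pi.-Hall(G) H -> ~~ abelian H ->
  (forall x, x \in H :\: 'Z(H) -> pi.-nat #|G : 'C_G[x]|) ->
  g \in G -> pi^'.-elt g -> x \in H :\: 'Z(H) ->
  exists2 h, h \in H & g \in 'C[x ^ h].
Proof.
move=> hallH nab hyp Gg pig xH.
have [sHG piH _] := and3P hallH.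
have nsHG := nsH hallH nab hyp.
have Hx : x \in H by case/setDP: xH.
pose A := <[g]>%G.
have nHA : A \subset 'N(H) by rewrite cycle_subG (subsetP (normal_norm nsHG)).
have coHA : coprime #|H| #|A| by apply: (pnat_coprime piH).
pose M := (H <*> A)%G.
have sMG : M \subset G by rewrite join_subG sHG cycle_subG.
have defM : M :=: H * A by rewrite /= norm_joinEr.
have oM : #|M| = (#|H| * #|A|)%N by rewrite defM TI_cardMg // coprime_TIg.
pose C := 'C_M[x]%G.
have defMC : C * H = M.
  apply/eqP; rewrite eqEsubset mul_subG ?subsetIl ?joing_subl //=.
  apply/subsetP=> m Mm.
  have [h Hh xmh] := classH hallH hyp xH (subsetP sMG m Mm).
  have -> : m = (m * h^-1) * h by rewrite mulgKV.
  apply: mem_mulg => //; rewrite inE groupM ?groupV //=; last first.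
    by rewrite (subsetP (joing_subl H A)).
  by apply: cent1_conj; rewrite conjgM xmh conjgK.
have oC : #|C| = (#|A| * #|C :&: H|)%N.
  have := mul_cardG C H; rewrite defMC oM => e.
  by apply/eqP; rewrite -(eqn_pmul2r (cardG_gt0 H)) e (mulnC (#|A| * _)%N) mulnA.
have nsCHC : (C :&: H)%G <| C.
  by rewrite /normal subsetIl normsI ?normG // (subset_trans (subsetIl M _))
    // (subset_trans sMG) // normal_norm.
have hallCH : Hall C (C :&: H)%G.
  rewrite /Hall subsetIl /= -divgS ?subsetIl // oC mulnK ?cardG_gt0 //.
  by rewrite coprime_sym (coprimegS (subsetIr _ _)) // coprime_sym.
have [B /complP [tiB defB]] := splitsP (SchurZassenhaus_split hallCH nsCHC).
have oB : #|A| = #|B|.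
  have := TI_cardMg tiB; rewrite defB oC => e.
  by apply/eqP; rewrite -(eqn_pmul2r (cardG_gt0 (C :&: H)%G)) e mulnC.
have sBC : B \subset C by rewrite -defB mulG_subr.
have sMAH : M \subset A <*> H by rewrite joingC.
have [y Hy defBy] := SchurZassenhaus_trans_actsol (abelian_sol (cycle_abelian g))
  nHA (subset_trans sBC (subset_trans (subsetIl M _) sMAH)) coHA oB.
exists y^-1; first by rewrite groupV.
rewrite cent1J mem_conjg invgK.
have : g ^ y \in B by rewrite defBy memJ_conjg cycle_id.
by move/(subsetP sBC); case/setIP.
Qed.

Lemma Zfix (gT : finGroupType) (H : {group gT}) z h :
  z \in 'Z(H) -> h \in H -> z ^ h = z.
Proof.
case/centerP=> _ cz Hh; apply: conj_cent1; apply/cent1P.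
exact: commute_sym (cz h Hh).
Qed.

Lemma Zfix2 (gT : finGroupType) (H : {group gT}) z y :
  z \in 'Z(H) -> y \in H -> y ^ z = y.
Proof.
case/centerP=> _ cz Hy; apply: conj_cent1; apply/cent1P.
exact: cz y Hy.
Qed.

Lemma key (gT : finGroupType) (pi : nat_pred) (G H : {group gT}) g :
  pi.-Hall(G) H -> ~~ abelian H ->
  (forall x, x \in H :\: 'Z(H) -> pi.-nat #|G : 'C_G[x]|) ->
  g \in G -> pi^'.-elt g -> H \subset 'C[g].
Proof.
move=> hallH nab hyp Gg pig.
have [sHG piH _] := and3P hallH.
pose Cg := 'C_H[g]%G; pose Z := 'Z(H)%G.
have cZCg : Z \subset 'C(Cg).
  apply: subset_trans (centS (subsetIl H 'C[g])).
  by rewrite /Z /= /center subsetIr.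
pose D := (Cg <*> Z)%G.
have defD : D :=: Cg * Z by rewrite /= cent_joinEr.
have sDH : D \subset H by rewrite join_subG subsetIl center_sub.
have DH : D :=: H.
  apply: cover_conj => // x Hx.
  case Zx: (x \in 'Z(H)).
    exists 1; rewrite ?group1 // conjg1 (subsetP (joing_subr Cg Z)) //.
  have xD : x \in H :\: 'Z(H) by rewrite inE Zx Hx.
  have [h Hh gc] := glaub hallH nab hyp Gg pig xD.
  exists h => //; apply: (subsetP (joing_subl Cg Z)).
  by rewrite inE groupJ // cent1C.
have decH : forall y, y \in H -> exists2 c, c \in Cg & exists2 z, z \in Z & y = c * z.
  move=> y; rewrite -DH defD; case/mulsgP=> c z Cc Zz ->.
  by exists c => //; exists z.
have [y Hy nZy] := noncentral nab.
have [x0 Cx0 [z0 Zz0 yE]] := decH y Hy.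
have Hx0 : x0 \in H by case/setIP: Cx0.
have nZx0 : x0 \notin 'Z(H).
  by apply: contra nZy => Zx0; rewrite yE groupM.
have x0g : x0 ^ g = x0.
  by apply: conj_cent1; rewrite cent1C; case/setIP: Cx0.
have coHg : coprime #|H| #[g] by apply: (pnat_coprime piH).
have Zg : forall z, z \in 'Z(H) -> z ^ g = z.
  move=> z Zz; have Hz : z \in H by apply: (subsetP (center_sub H)).
  have xzD : x0 * z \in H :\: 'Z(H).
    rewrite inE (groupM Hx0 Hz) andbT; apply: contra nZx0 => Zxz.
    by rewrite -(mulgK z x0) groupM ?groupV.
  have [h Hh e] := classH hallH hyp xzD Gg.
  have [c Cc [z' Zz' hE]] := decH h Hh.
  have Hc : c \in H by case/setIP: Cc.
  pose w := x0^-1 * x0 ^ c.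
  have wC : w \in Cg by rewrite groupM ?groupV // groupJ.
  have wg : w ^ g = w by apply: conj_cent1; rewrite cent1C; case/setIP: wC.
  have zgE : z ^ g = w * z.
    move: e; rewrite !conjMg x0g (Zfix Zz Hh) hE conjgM.
    rewrite (Zfix2 Zz' (groupJ Hx0 Hc)) => e.
    by rewrite /w -mulgA -e mulKg.
  have zgn : forall n, z ^ (g ^+ n) = w ^+ n * z.
    elim=> [|n IH]; first by rewrite !expg0 conjg1 mul1g.
    by rewrite expgSr conjgM IH conjMg conjXg wg zgE mulgA -expgSr.
  have w1 : w ^+ #[g] = 1.
    have := zgn #[g]; rewrite expg_order conjg1 => e2.
    by apply: (mulIg z); rewrite mul1g -e2.
  have : #[w] %| gcdn #|H| #[g].
    rewrite dvdn_gcd order_dvdG ?order_dvdn ?w1 ?eqxx //.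
    by case/setIP: wC.
  rewrite (eqP coHg) dvdn1 order_eq1 => /eqP w1'.
  by rewrite zgE w1' mul1g.
apply/subsetP=> u Hu; rewrite cent1C; apply: cent1_conj.
have [c Cc [z Zz ->]] := decH u Hu.
rewrite conjMg (Zg z Zz) (@conj_cent1 _ c g) //.
by rewrite cent1C; case/setIP: Cc.
Qed.

Theorem mainTheorem8 (gT : finGroupType) (pi : nat_pred) (G H : {group gT}) :
  pi.-Hall(G) H -> ~~ abelian H ->
  (forall x, x \in H :\: 'Z(H) -> pi.-nat #|G : 'C_G[x]|) ->
  pi_decomposable pi G.
Proof.
move=> hallH nab hyp.
have [sHG piH pi'iH] := and3P hallH.
have nsHG := nsH hallH nab hyp.
have [K /complP [tiHK defG]] := splitsP (SchurZassenhaus_split (pHall_Hall hallH) nsHG).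
have sKG : K \subset G by rewrite -defG mulG_subr.
have oG : #|G| = (#|H| * #|K|)%N by rewrite -defG TI_cardMg.
have iGH : #|G : H| = #|K| by rewrite -divgS // oG mulKn.
have iGK : #|G : K| = #|H| by rewrite -divgS // oG mulnK.
have piK : pi^'.-group K by rewrite /pgroup -iGH.
have cHK : K \subset 'C(H).
  rewrite centsC; apply/centsP=> h Hh k Kk.
  have := subsetP (key hallH nab hyp (subsetP sKG k Kk) (mem_p_elt piK Kk)) h Hh.
  by move/cent1P.
have nsKG : K <| G.
  rewrite /normal sKG -defG mul_subG ?normG // cents_norm //.
  by rewrite centsC.
have hallK : pi^'.-Hall(G) K.
  by rewrite /pHall sKG piK iGK pnatNK.
rewrite /pi_decomposable (normal_Hall_pcore hallH nsHG).
rewrite (normal_Hall_pcore hallK nsKG) dprodE //.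
Qed.
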